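(* Let $G=(V,E)$ be a network, $s,t\in V$, and $B$ any bound. Let $L^{(s,t)}$ be the set of weight-shortest paths from $s$ to $t$, and let $\mathbb{L}=\bigcap_{\pi\in L^{(s,t)}}\pi$ be the set of in-all-weight-shortest-paths links. Then every survivable connection $(\pi_1,\pi_2)$ that is an optimal solution of the CT-Constrained QoS Max-Survivability problem with bound $B$ satisfies $\mathbb{C}(\pi_1,\pi_2)\subseteq\mathbb{L}$.
   Context: A network is a directed graph $G=(V,E)$, $N=|V|$, $M=|E|$. Each link $e$ has a failure probability $p_e\in(0,p_{max}]$ with $p_{max}<1$, and a positive weight $w_e$. Paths are identified with their sets of links. $P^{(s,t)}$ is the set of simple paths from $s$ to $t$. A survivable connection from $s$ to $t$ is a pair $(\pi_1,\pi_2)\in P^{(s,t)}\times P^{(s,t)}$; the two paths may coincide. Its critical links are $\mathbb{C}(\pi_1,\pi_2)=\pi_1\cap\pi_2$. Its survivability level is $\prod_{e\in\pi_1\cap\pi_2}(1-p_e)$, which equals $1$ if there are no critical links. The weight of a path is $W(\pi)=\sum_{e\in\pi}w_e$. A weight-shortest path from $u$ to $v$ is a path from $u$ to $v$ of minimum weight. The CT-weight of a connection is $W_{CT}(\pi_1,\pi_2)=W(\pi_1)+W(\pi_2)$. CT-Constrained QoS Max-Survivability (CT-CQMS) problem: given $G$, $s$, $t$ and a bound $B$, find a survivable connection $(\pi_1,\pi_2)$ from $s$ to $t$ maximizing $\prod_{e\in\pi_1\cap\pi_2}(1-p_e)$ subject to $W_{CT}(\pi_1,\pi_2)\le B$. 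*)

(* Defs.v *)
From HB Require Import structures.
From mathcomp Require Import all_boot all_order all_algebra.
Set Implicit Arguments. Unset Strict Implicit. Unset Printing Implicit Defensive.
Import Order.TTheory GRing.Theory Num.Theory.
Local Open Scope ring_scope.

(* A path from s is a vertex sequence s :: q; its links are the consecutive
   pairs. *)

Definition links {V : finType} (s : V) (q : seq V) : {set V * V} :=
  [set e in zip (s :: q) q].

Definition simple_path {V : finType} (adj : rel V) (s t : V) (q : seq V) : bool :=
  [&& path adj s q, last s q == t & uniq (s :: q)].

Definition pweight {R : numDomainType} {V : finType} (w : V * V -> R)
  (s : V) (q : seq V) : R := \sum_(e in links s q) w e.

Definition critical {V : finType} (s : V) (q1 q2 : seq V) : {set V * V} :=
  links s q1 :&: links s q2.

Definition surv {R : numDomainType} {V : finType} (p : V * V -> R)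
  (s : V) (q1 q2 : seq V) : R := \prod_(e in critical s q1 q2) (1 - p e).

Definition ct_weight {R : numDomainType} {V : finType} (w : V * V -> R)
  (s : V) (q1 q2 : seq V) : R := pweight w s q1 + pweight w s q2.

Definition weight_shortest {R : numDomainType} {V : finType} (adj : rel V)
  (w : V * V -> R) (s t : V) (q : seq V) : Prop :=
  simple_path adj s t q /\
  forall q', simple_path adj s t q' -> pweight w s q <= pweight w s q'.

Definition ct_feasible {R : numDomainType} {V : finType} (adj : rel V)
  (w : V * V -> R) (s t : V) (B : R) (q1 q2 : seq V) : Prop :=
  [/\ simple_path adj s t q1, simple_path adj s t q2 & ct_weight w s q1 q2 <= B].

Definition ct_cqms_optimal {R : numDomainType} {V : finType} (adj : rel V)
  (p w : V * V -> R) (s t : V) (B : R) (q1 q2 : seq V) : Prop :=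
  ct_feasible adj w s t B q1 q2 /\
  forall r1 r2, ct_feasible adj w s t B r1 r2 -> surv p s r1 r2 <= surv p s q1 q2.

Definition in_all_shortest {R : numDomainType} {V : finType} (adj : rel V)
  (w : V * V -> R) (s t : V) (e : V * V) : Prop :=
  forall q, weight_shortest adj w s t q -> e \in links s q.

(* Main.v *)
Require Import Defs.
From HB Require Import structures.
From mathcomp Require Import all_boot all_order all_algebra.
From mathcomp Require Import lra zify.
Import Order.TTheory GRing.Theory Num.Theory.
Set Implicit Arguments. Unset Strict Implicit. Unset Printing Implicit Defensive.
Local Open Scope ring_scope.

Section G.
Variable V : finType.
Implicit Types (x y z : V) (p : seq V).

Lemma zip_cat_walk x p p' :
  zip (x :: p ++ p') (p ++ p') = zip (x :: p) p ++ zip (last x p :: p') p'.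
Proof. by elim: p x => [|y p IH] x //=; rewrite IH. Qed.

Lemma links_cat x p p' : links x (p ++ p') = links x p :|: links (last x p) p'.
Proof. by apply/setP => e; rewrite !inE zip_cat_walk mem_cat. Qed.

Lemma links_cons x y p : links x (y :: p) = (x, y) |: links y p.
Proof. by apply/setP => e; rewrite !inE. Qed.

Lemma links_nil x : links x [::] = set0.
Proof. by apply/setP => e; rewrite !inE. Qed.

Lemma links_mem x p a b : (a, b) \in links x p -> a \in belast x p /\ b \in p.
Proof.
elim: p x => [|y p IH] x; first by rewrite links_nil inE.
rewrite links_cons in_setU1 => /orP [/eqP [-> ->]|he].
  by rewrite /= !inE !eqxx.
have [h1 h2] := IH y he.
by split; rewrite /= inE ?h1 ?h2 orbT.
Qed.

Lemma links_fst x p a b : (a, b) \in links x p -> a \in x :: p.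
Proof. by move/links_mem => [/mem_belast]. Qed.

Lemma links_adj (adj : rel V) x p a b : path adj x p -> (a, b) \in links x p -> adj a b.
Proof.
elim: p x => [|y p IH] x; first by rewrite links_nil inE.
rewrite links_cons /= in_setU1 => /andP [hxy hp] /orP [/eqP [-> ->]//|].
exact: IH hp.
Qed.

Lemma links_split x p u v : (u, v) \in links x p ->
  exists p1 p2, p = p1 ++ v :: p2 /\ last x p1 = u.
Proof.
elim: p x => [|y p IH] x; first by rewrite links_nil inE.
rewrite links_cons in_setU1 => /orP [/eqP [-> ->]|he].
  by exists [::], p.
have [p1 [p2 [-> <-]]] := IH y he.
by exists (y :: p1), p2.
Qed.

Lemma shortcut (adj : rel V) x p : path adj x p -> exists p',
  [/\ path adj x p', last x p' = last x p, uniq (x :: p'),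
      links x p' \subset links x p & {subset p' <= p}].
Proof.
move: {2}(size p) (leqnn (size p)) => n.
elim: n x p => [|n IH] x p.
  by rewrite leqn0 => /nilP -> _; exists [::]; rewrite /= subxx.
move=> hs hp.
case hx: (x \in p).
  case/splitPr: hx hs hp => p1 p2 hs.
  rewrite cat_path /= => /and3P [_ _ hp2].
  have hs2 : (size p2 <= n)%N by move: hs; rewrite size_cat /=; lia.
  have [p' [h1 h2 h3 h4 h5]] := IH x p2 hs2 hp2.
  exists p'; split => //.
  - by rewrite last_cat /= h2.
  - apply: (subset_trans h4); rewrite links_cat links_cons.
    by apply/subsetP => e he; rewrite !in_setU he !orbT.
  - by move=> z /h5 hz; rewrite mem_cat inE hz !orbT.
case: p hs hp hx => [|y p0] hs hp hx.
  by exists [::]; rewrite /= subxx.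
move: hp => /= /andP [hxy hp0].
have [p' [h1 h2 h3 h4 h5]] := IH y p0 hs hp0.
have hxn : x \notin y :: p'.
  rewrite inE negb_or; apply/andP; split.
    by apply/eqP => exy; move: hx; rewrite exy inE eqxx.
  by apply/negP => /h5 hz; move: hx; rewrite inE hz orbT.
exists (y :: p'); split.
- by rewrite /= hxy.
- by [].
- by move: h3; rewrite /= hxn => ->.
- rewrite !links_cons; apply/subsetP => e; rewrite !in_setU => /orP [->//|he].
  by rewrite (subsetP h4 _ he) orbT.
- by move=> z; rewrite !inE => /orP [->//|/h5 ->]; rewrite orbT.
Qed.


Lemma first_hit (P : pred V) x p : ~~ P x -> P (last x p) ->
  exists m p3, [/\ p = m ++ p3, P (last x m) & all (predC P) (belast x m)].
Proof.
elim: p x => [|y p IH] x hx hl; first by rewrite /= (negbTE hx) in hl.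
case hy: (P y).
  by exists [:: y], p; split => //=; rewrite hx.
have [m [p3 [-> h1 h2]]] := IH y (negbT hy) hl.
by exists (y :: m), p3; split => //=; rewrite hx h2.
Qed.

Lemma last_hit (Q : pred V) x p : Q x ->
  exists p1 m, [/\ p = p1 ++ m, Q (last x p1) & all (predC Q) m].
Proof.
move=> hx; elim/last_ind: p => [|p z [p1 [m [-> h1 h2]]]]; first by exists [::], [::].
case hz: (Q z).
  by exists (rcons (p1 ++ m) z), [::]; rewrite cats0 last_rcons.
by exists p1, (rcons m z); rewrite rcons_cat all_rcons /= hz h2.
Qed.

Lemma uniq_last_cat x p p' : uniq (x :: p ++ p') -> uniq (last x p :: p').
Proof.
rewrite -cat_cons cat_uniq => /and3P [_ /hasPn h h3]; rewrite cons_uniq h3 andbT.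
by apply/negP => /h; rewrite /= mem_last.
Qed.

Section W.
Variable R : realFieldType.
Variable w : V * V -> R.
Implicit Types (A B : {set V * V}).
Definition pw (A : {set V * V}) : R := \sum_(e in A) w e.

Lemma pw_sub A B : A \subset B -> (forall e, e \in B -> 0 <= w e) -> pw A <= pw B.
Proof.
move=> hAB hB; rewrite /pw [X in _ <= X](big_setID A).
have -> : B :&: A = A by apply/setIidPr.
rewrite lerDl; apply: sumr_ge0 => e; rewrite inE => /andP [_ he]; exact: hB.
Qed.

Lemma pw_U A B : (forall e, e \in A :|: B -> 0 <= w e) -> pw (A :|: B) <= pw A + pw B.
Proof.
move=> h; rewrite /pw [X in X <= _](big_setID A).
have -> : (A :|: B) :&: A = A by apply/setIidPr; apply: subsetUl.
rewrite lerD2l; apply: (pw_sub (A := (A :|: B) :\: A)).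
  by apply/subsetP => e; rewrite !inE => /andP [/negbTE -> /=].
by move=> e he; apply: h; rewrite inE he orbT.
Qed.

Lemma pw_Ud A B : (forall e, e \in A -> e \in B -> False) -> pw (A :|: B) = pw A + pw B.
Proof.
move=> h; rewrite /pw [LHS](big_setID A).
have -> : (A :|: B) :&: A = A by apply/setIidPr; apply: subsetUl.
congr (_ + _); apply: eq_bigl => e; rewrite !inE.
by case hA: (e \in A); case hB: (e \in B) => //=; exfalso; exact: h hA hB.
Qed.

Lemma pw1 e : pw [set e] = w e.
Proof. by rewrite /pw big_set1. Qed.

Lemma pw0 : pw set0 = 0.
Proof. by rewrite /pw big_set0. Qed.

End W.

Section P.
Variable R : realFieldType.
Variable adj : rel V.
Variable w : V * V -> R.
Hypothesis hw0 : forall u v, adj u v -> 0 <= w (u, v).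
Local Notation pw := (pw w).

Lemma walk_nn x p : path adj x p -> forall e, e \in links x p -> 0 <= w e.
Proof. by move=> hp [a b] he; apply: hw0; exact: links_adj hp he. Qed.

Lemma pw_cat_le x p p' : path adj x (p ++ p') ->
  pw (links x (p ++ p')) <= pw (links x p) + pw (links (last x p) p').
Proof.
move=> hp; rewrite links_cat; apply: pw_U => e; rewrite -links_cat. move=> he; exact: (walk_nn hp he).
Qed.

Lemma pw_cat_eq x p p' : uniq (x :: p ++ p') ->
  pw (links x (p ++ p')) = pw (links x p) + pw (links (last x p) p').
Proof.
move=> hu; rewrite links_cat; apply: pw_Ud => [[a b]] /links_mem [_ h1] /links_mem [_ h2].
move: hu; rewrite cons_uniq cat_uniq => /andP [_ /and3P [_ /hasPn hn _]].
by move: (hn _ h2); rewrite /= h1.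
Qed.

Lemma pw_U1_le x p e : path adj x p -> 0 <= w e ->
  pw (e |: links x p) <= w e + pw (links x p).
Proof.
move=> hp he; rewrite -(pw1 w e); apply: pw_U => f; rewrite in_setU in_set1 => /orP [/eqP ->//|hf].
exact: (walk_nn hp hf).
Qed.

Definition dec s t u v q a c := [/\ q = a ++ v :: c, last s a = u & simple_path adj s t q].

Lemma dec_of s t q u v : simple_path adj s t q -> (u, v) \in links s q ->
  exists a c, dec s t u v q a c.
Proof.
move=> hq /links_split [a [c [hqe hl]]]; by exists a, c; split.
Qed.

Section D.
Variables (s t u v : V) (q a c : seq V).
Hypothesis hd : dec s t u v q a c.

Lemma dec_path : [/\ path adj s a, adj u v & path adj v c].
Proof.
case: hd => -> hl /and3P [hp _ _]; move: hp; rewrite cat_path hl /= => /and3P [*].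
by split.
Qed.

Lemma dec_last : last v c = t.
Proof. by case: hd => -> hl /and3P [_ /eqP <- _]; rewrite last_cat hl. Qed.

Lemma dec_uniq : [/\ uniq (s :: a), uniq (v :: c) & forall z, z \in s :: a -> z \notin v :: c].
Proof.
case: hd => -> hl /and3P [_ _ hu]; move: hu.
rewrite -cat_cons cat_uniq => /and3P [h1 /hasPn h2 h3]; split => // z hz.
by apply/negP => /h2; rewrite hz.
Qed.

Lemma dec_links : links s q = links s a :|: ((u, v) |: links v c).
Proof. by case: hd => -> hl _; rewrite links_cat hl links_cons. Qed.

Lemma dec_e_a : (u, v) \notin links s a.
Proof.
apply/negP => /links_mem [_ h]; have [_ _ h3] := dec_uniq.
by move: (h3 v); rewrite inE h orbT inE eqxx => /(_ isT).
Qed.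

Lemma dec_e_c : (u, v) \notin links v c.
Proof.
apply/negP => /links_mem [_ h]; have [_ h2 _] := dec_uniq.
by move: h2; rewrite cons_uniq h.
Qed.

Lemma dec_ac l : l \in links s a -> l \in links v c -> False.
Proof.
case: l => [x y] /links_mem [_ h1] /links_mem [_ h2]; have [_ _ h3] := dec_uniq.
by move: (h3 y); rewrite !inE h1 h2 !orbT => /(_ isT).
Qed.

Lemma dec_pw : pw (links s q) = pw (links s a) + w (u, v) + pw (links v c).
Proof.
rewrite dec_links pw_Ud; last first.
  move=> l hl; rewrite in_setU in_set1 => /orP [/eqP el|]; last exact: dec_ac hl.
  by move: dec_e_a; rewrite -el hl.
rewrite pw_Ud ?pw1 ?addrA // => l; rewrite in_set1 => /eqP -> h.
by move: dec_e_c; rewrite h.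
Qed.

End D.

Lemma seg s t l l1 m l3 (zz : seq V) : simple_path adj s t l ->
  (forall q', simple_path adj s t q' -> pw (links s l) <= pw (links s q')) ->
  l = l1 ++ m ++ l3 -> path adj (last s l1) zz ->
  last (last s l1) zz = last (last s l1) m ->
  pw (links (last s l1) m) <= pw (links (last s l1) zz).
Proof.
move=> /and3P [hp /eqP hlt hu] hmin hl hz hzl.
subst l; move: hp; rewrite cat_path => /andP [hp1]; rewrite cat_path => /andP [hpm hp3].
have hZ : path adj s (l1 ++ zz ++ l3) by rewrite cat_path hp1 cat_path hz hzl hp3.
have [Z' [h1 h2 h3 h4 _]] := shortcut hZ.
have hsZ : simple_path adj s t Z'.
  by rewrite /simple_path h1 h3 h2 !last_cat hzl -hlt !last_cat eqxx.
have e1 := hmin _ hsZ.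
have e2 : pw (links s Z') <= pw (links s (l1 ++ zz ++ l3)).
  apply: pw_sub h4 _ => f hf; exact: (walk_nn hZ hf).
have e3 := pw_cat_le hZ.
have hZ2 : path adj (last s l1) (zz ++ l3) by rewrite cat_path hz hzl hp3.
have e4 := pw_cat_le hZ2.
rewrite hzl in e4.
have e5 := pw_cat_eq hu.
have e6 := pw_cat_eq (uniq_last_cat hu).
lra.
Qed.

Definition good s t q1 q2 e := exists r1 r2, [/\ path adj s r1, last s r1 = t,
  path adj s r2 & last s r2 = t] /\
  (links s r1 :&: links s r2 \subset (links s q1 :&: links s q2) :\ e /\
  pw (links s r1) + pw (links s r2) <= pw (links s q1) + pw (links s q2)).

Lemma good_sym s t q1 q2 e : good s t q1 q2 e -> good s t q2 q1 e.
Proof.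
move=> [r1 [r2 [[h1 h2 h3 h4] [h5 h6]]]]; exists r2, r1; do !split => //.
  by rewrite setIC (setIC (links s q2)).
by rewrite addrC (addrC (pw (links s q2))).
Qed.

Lemma same s t u v q1 a1 c1 q2 a2 c2 a11 a12 c11 c12 m :
  dec s t u v q1 a1 c1 -> dec s t u v q2 a2 c2 -> a1 = a11 ++ a12 -> c1 = c11 ++ c12 ->
  path adj (last s a11) m -> last (last s a11) m = last v c11 ->
  (forall l, l \in links (last s a11) m -> l \notin links s q1 /\ l \notin links s q2) ->
  pw (links (last s a11) m) <= pw (links (last s a11) a12) + w (u, v) + pw (links v c11) ->
  good s t q1 q2 (u, v).
Proof.
move=> d1 d2 ea ec hm hml hM hMw.
have [hpa1 huv hpc1] := dec_path d1.
have [hu1 hu1c _] := dec_uniq d1.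
have ht1 := dec_last d1.
have hq2 : simple_path adj s t q2 by case: d2.
move: hpa1 hpc1 hu1 hu1c ht1; rewrite ea ec.
rewrite cat_path => hpa1 /[dup] hpc1; rewrite cat_path => /andP [_ hpc12].
move: hpa1 => /[dup] hpa1 /andP [hpa11 _] hu1 hu1c ht1.
set x := last s a11 in hm hml hM hMw hpa11 *.
have hr1 : path adj s (a11 ++ m ++ c12) by rewrite cat_path hpa11 cat_path hm hml hpc12.
have hL : links s (a11 ++ m ++ c12) = links s a11 :|: (links x m :|: links (last v c11) c12).
  by rewrite links_cat links_cat hml.
exists (a11 ++ m ++ c12), q2; split; first split => //.
- by rewrite !last_cat hml -last_cat.
- by case/and3P: hq2.
- by case/and3P: hq2 => _ /eqP.
split.
  apply/subsetP => l; rewrite in_setI => /andP [hl1 hl2].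
  rewrite in_setD1 in_setI hl2 andbT.
  move: hl1; rewrite hL !in_setU => /or3P [hl|hl|hl].
  - have hla : l \in links s a1 by rewrite ea links_cat in_setU hl.
    rewrite (dec_links d1) in_setU hla andbT.
    by apply/eqP => el; move: (dec_e_a d1); rewrite -el hla.
  - by have [_ /negP] := hM l hl.
  - have hlc : l \in links v c1 by rewrite ec links_cat in_setU hl orbT.
    rewrite (dec_links d1) !in_setU hlc !orbT andbT.
    by apply/eqP => el; move: (dec_e_c d1); rewrite -el hlc.
have e1 := pw_cat_le hr1.
have hr1' : path adj x (m ++ c12) by rewrite cat_path hm hml hpc12.
have e2 := pw_cat_le hr1'.
rewrite hml in e2.
have e3 := dec_pw d1.
rewrite ea ec in e3.
have e4 := pw_cat_eq hu1.
have e5 := pw_cat_eq hu1c.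
rewrite -/x in e4.
lra.
Qed.

Lemma cross s t u v q1 a1 c1 q2 a2 c2 a11 a12 c21 c22 m :
  dec s t u v q1 a1 c1 -> dec s t u v q2 a2 c2 -> a1 = a11 ++ a12 -> c2 = c21 ++ c22 ->
  path adj (last s a11) m -> last (last s a11) m = last v c21 ->
  (forall l, l \in links (last s a11) m -> l \notin links s q1 /\ l \notin links s q2) ->
  pw (links (last s a11) m) <= pw (links (last s a11) a12) + w (u, v) + pw (links v c21) ->
  good s t q1 q2 (u, v).
Proof.
move=> d1 d2 ea ec hm hml hM hMw.
have [hpa1 huv hpc1] := dec_path d1.
have [hpa2 _ hpc2] := dec_path d2.
have [hu1 _ _] := dec_uniq d1.
have [_ hu2c _] := dec_uniq d2.
have ht1 := dec_last d1.
have ht2 := dec_last d2.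
have hla2 : last s a2 = u by case: d2.
move: hpa1 hpc2 hu1 hu2c ht2; rewrite ea ec.
rewrite cat_path => hpa1 /[dup] hpc2; rewrite cat_path => /andP [_ hpc22].
move: hpa1 => /[dup] hpa1 /andP [hpa11 _] hu1 hu2c ht2.
set x := last s a11 in hm hml hM hMw hpa11 *.
have hr1 : path adj s (a11 ++ m ++ c22) by rewrite cat_path hpa11 cat_path hm hml hpc22.
have hL : links s (a11 ++ m ++ c22) = links s a11 :|: (links x m :|: links (last v c21) c22).
  by rewrite links_cat links_cat hml.
have hr2 : path adj s (a2 ++ v :: c1) by rewrite cat_path hpa2 hla2 /= huv hpc1.
have hL2 : links s (a2 ++ v :: c1) = links s a2 :|: ((u, v) |: links v c1).
  by rewrite links_cat hla2 links_cons.
exists (a11 ++ m ++ c22), (a2 ++ v :: c1); split; first split => //.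
- by rewrite !last_cat hml -last_cat.
- by rewrite last_cat hla2 /= ht1.
split.
  apply/subsetP => l; rewrite in_setI => /andP [hl1 hl2].
  have hq12 : l \in links s q1 \/ l \in links s q2.
    move: hl2; rewrite hL2 !in_setU in_set1 => /or3P [h|/eqP ->|h].
    - by right; rewrite (dec_links d2) in_setU h.
    - by left; rewrite (dec_links d1) !in_setU in_set1 eqxx orbT.
    - by left; rewrite (dec_links d1) !in_setU h !orbT.
  rewrite in_setD1 in_setI.
  move: hl1; rewrite hL !in_setU => /or3P [hl|hl|hl].
  - have hla : l \in links s a1 by rewrite ea links_cat in_setU hl.
    have hne : l != (u, v) by apply/eqP => el; move: (dec_e_a d1); rewrite -el hla.
    rewrite hne (dec_links d1) in_setU hla /=.
    move: hl2; rewrite hL2 !in_setU in_set1 (negbTE hne) /= => /orP [h|h].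
      by rewrite (dec_links d2) in_setU h.
    by case: (dec_ac d1 hla h).
  - by have [/negP h1 /negP h2] := hM l hl; case: hq12.
  - have hlc : l \in links v c2 by rewrite ec links_cat in_setU hl orbT.
    have hne : l != (u, v) by apply/eqP => el; move: (dec_e_c d2); rewrite -el hlc.
    rewrite hne (dec_links d2) !in_setU hlc !orbT andbT /=.
    move: hl2; rewrite hL2 !in_setU in_set1 (negbTE hne) /= => /orP [h|h].
      by case: (dec_ac d2 h hlc).
    by rewrite (dec_links d1) !in_setU h !orbT.
have e1 := pw_cat_le hr1.
have hr1' : path adj x (m ++ c22) by rewrite cat_path hm hml hpc22.
have e2 := pw_cat_le hr1'.
rewrite hml in e2.
have e3 := dec_pw d1.
have e3' := dec_pw d2.
rewrite ea in e3. rewrite ec in e3'.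
have e4 := pw_cat_eq hu1.
have e5 := pw_cat_eq hu2c.
rewrite -/x in e4.
have e6 := pw_cat_le hr2.
rewrite hla2 links_cons in e6.
have e7 := pw_U1_le hpc1 (hw0 huv).
lra.
Qed.

Lemma splitl_ex x p z : z \in x :: p -> exists p1 p2, p = p1 ++ p2 /\ last x p1 = z.
Proof. by case/splitPl => p1 p2 h; exists p1, p2. Qed.

Lemma pw_ge0 x p : path adj x p -> 0 <= pw (links x p).
Proof. move=> hp; apply: sumr_ge0 => e he; exact: (walk_nn hp he). Qed.

Lemma cross0 s t u v q1 a1 c1 q2 a2 c2 z :
  dec s t u v q1 a1 c1 -> dec s t u v q2 a2 c2 -> z \in s :: a1 -> z \in v :: c2 ->
  good s t q1 q2 (u, v).
Proof.
move=> d1 d2 /splitl_ex [a11 [a12 [ea ez]]] /splitl_ex [c21 [c22 [ec ez']]].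
apply: (cross (m := [::]) d1 d2 ea ec) => //=.
- by rewrite ez ez'.
- by move=> l; rewrite links_nil in_set0.
have [hpa1 huv _] := dec_path d1.
have [_ _ hpc2] := dec_path d2.
move: hpa1 hpc2; rewrite ea ec !cat_path => /andP [_ h1] /andP [h2 _].
rewrite links_nil pw0.
have := pw_ge0 h1; have := pw_ge0 h2; have := hw0 huv; lra.
Qed.

Lemma mkMw s t u v l l1 m l3 qi ai ci qj aj cj ai1 ai2 cj1 cj2 :
  simple_path adj s t l ->
  (forall q', simple_path adj s t q' -> pw (links s l) <= pw (links s q')) ->
  l = l1 ++ m ++ l3 -> dec s t u v qi ai ci -> dec s t u v qj aj cj ->
  ai = ai1 ++ ai2 -> cj = cj1 ++ cj2 -> last s ai1 = last s l1 ->
  last v cj1 = last (last s l1) m ->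
  pw (links (last s ai1) m) <= pw (links (last s ai1) ai2) + w (u, v) + pw (links v cj1).
Proof.
move=> hl hmin el di dj ea ec hx hy.
have [hpa huv _] := dec_path di.
have [_ _ hpc] := dec_path dj.
have hla : last s ai = u by case: di.
move: hpa hpc hla; rewrite ea ec !cat_path last_cat => /andP [_ h1] /andP [h2 _] hla.
rewrite hx in h1 hla *.
have hz : path adj (last s l1) (ai2 ++ v :: cj1) by rewrite cat_path h1 hla /= huv h2.
have := seg hl hmin el hz; rewrite last_cat hla /= -hy => /(_ erefl) e1.
have e2 := pw_cat_le hz.
rewrite hla links_cons in e2.
have e3 := pw_U1_le h2 (hw0 huv).
lra.
Qed.

Lemma main_good s t q1 q2 u v l :
  simple_path adj s t q1 -> simple_path adj s t q2 ->
  (u, v) \in links s q1 -> (u, v) \in links s q2 ->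
  simple_path adj s t l ->
  (forall q', simple_path adj s t q' -> pw (links s l) <= pw (links s q')) ->
  (u, v) \notin links s l ->
  good s t q1 q2 (u, v).
Proof.
move=> hq1 hq2 he1 he2 hl hmin hel.
have [a1 [c1 d1]] := dec_of hq1 he1.
have [a2 [c2 d2]] := dec_of hq2 he2.
case h1: (has (mem (v :: c2)) (s :: a1)).
  by move/hasP: h1 => [z hz1 hz2]; exact: cross0 d1 d2 hz1 hz2.
case h2: (has (mem (v :: c1)) (s :: a2)).
  by move/hasP: h2 => [z hz1 hz2]; apply: good_sym; exact: cross0 d2 d1 hz1 hz2.
set VA := (s :: a1) ++ (s :: a2).
set VC := (v :: c1) ++ (v :: c2).
have hdis : forall z, z \in VA -> z \notin VC.
  move=> z; rewrite mem_cat => /orP [hz|hz]; rewrite mem_cat negb_or; apply/andP; split.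
  - by have [_ _ h] := dec_uniq d1; exact: h.
  - by move/negbT/hasPn: h1 => /(_ z hz).
  - by move/negbT/hasPn: h2 => /(_ z hz).
  - by have [_ _ h] := dec_uniq d2; exact: h.
have hsA : s \in VA by rewrite mem_cat inE eqxx.
have htC : t \in VC by rewrite mem_cat -(dec_last d1) mem_last.
have /and3P [hlp hlt hlu] := hl.
have hlC : last s l \in VC by rewrite (eqP hlt).
have [m0 [l3 [el hy hbel]]] := first_hit (P := fun z => z \in VC) (hdis _ hsA) hlC.
have [l1 [m [em hx hall]]] := last_hit (Q := fun z => z \in VA) m0 hsA.
set x := last s l1 in hx.
have el' : l = l1 ++ m ++ l3 by rewrite el em catA.
have hym : last x m = last s m0 by rewrite em last_cat.
have hpm : path adj x m.
  by move: hlp; rewrite el' cat_path => /andP [_]; rewrite cat_path => /andP [].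
have hM : forall lk, lk \in links x m -> lk \notin links s q1 /\ lk \notin links s q2.
  move=> [a b] hab; have [ha hb] := links_mem hab.
  have hbA : b \notin VA by move/allP: hall => /(_ b hb).
  have haC : a \notin VC.
    by move/allP: hbel => /(_ a); rewrite em belast_cat mem_cat ha orbT => /(_ isT).
  have habl : (a, b) != (u, v).
    apply/eqP => eab; move: hel; rewrite -eab el' links_cat links_cat !in_setU hab.
    by rewrite orbT.
  have key : forall qi ai ci, dec s t u v qi ai ci -> {subset s :: ai <= VA} ->
      {subset v :: ci <= VC} -> (a, b) \notin links s qi.
    move=> qi ai ci di hA hC; rewrite (dec_links di) !in_setU in_set1 (negbTE habl) /=.
    apply/negP => /orP [/links_mem [_ h]|h].
      by move: hbA; rewrite hA // inE h orbT.
    by move: haC; rewrite hC //; apply: links_fst h.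
  split.
    by apply: (key _ _ _ d1) => z hz; rewrite mem_cat hz ?orbT.
  by apply: (key _ _ _ d2) => z hz; rewrite mem_cat hz ?orbT.
have hM' : forall lk, lk \in links x m -> lk \notin links s q2 /\ lk \notin links s q1.
  by move=> lk /hM [].
move: hx hy; rewrite !mem_cat -hym => /orP [hx|hx] /orP [hy|hy].
- have [a11 [a12 [ea hxa]]] := splitl_ex hx.
  have [c11 [c12 [ec hyc]]] := splitl_ex hy.
  apply: (same (m := m) d1 d2 ea ec); rewrite hxa // ?hyc //.
  by have := mkMw hl hmin el' d1 d1 ea ec hxa hyc; rewrite hxa.
- have [a11 [a12 [ea hxa]]] := splitl_ex hx.
  have [c11 [c12 [ec hyc]]] := splitl_ex hy.
  apply: (cross (m := m) d1 d2 ea ec); rewrite hxa // ?hyc //.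
  by have := mkMw hl hmin el' d1 d2 ea ec hxa hyc; rewrite hxa.
- have [a11 [a12 [ea hxa]]] := splitl_ex hx.
  have [c11 [c12 [ec hyc]]] := splitl_ex hy.
  apply: good_sym; apply: (cross (m := m) d2 d1 ea ec); rewrite hxa // ?hyc //.
  by have := mkMw hl hmin el' d2 d1 ea ec hxa hyc; rewrite hxa.
- have [a11 [a12 [ea hxa]]] := splitl_ex hx.
  have [c11 [c12 [ec hyc]]] := splitl_ex hy.
  apply: good_sym; apply: (same (m := m) d2 d1 ea ec); rewrite hxa // ?hyc //.
  by have := mkMw hl hmin el' d2 d2 ea ec hxa hyc; rewrite hxa.
Qed.

End P.
End G.

Unset Implicit Arguments.

Theorem theorem1 (R : realFieldType) (V : finType) (adj : rel V)
  (p w : V * V -> R) (pmax : R)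
  (hpmax : pmax < 1)
  (hp : forall u v, adj u v -> 0 < p (u, v) /\ p (u, v) <= pmax)
  (hw : forall u v, adj u v -> 0 < w (u, v))
  (s t : V) (B : R) (q1 q2 : seq V) :
  ct_cqms_optimal adj p w s t B q1 q2 ->
  forall e, e \in critical s q1 q2 -> in_all_shortest adj w s t e.
Proof.
move=> [[f1 f2 hB] hopt] [u v] he q [hq hmin].
apply/idPn => hel.
have hw0 : forall a b, adj a b -> 0 <= w (a, b) by move=> a b /hw /ltW.
move: (he); rewrite /critical in_setI => /andP [he1 he2].
have [r1 [r2 [[hp1 hl1 hp2 hl2] [hc hW]]]] := main_good hw0 f1 f2 he1 he2 hq hmin hel.
have [r1' [g1 g2 g3 g4 _]] := shortcut hp1.
have [r2' [k1 k2 k3 k4 _]] := shortcut hp2.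
have hfeas : ct_feasible adj w s t B r1' r2'.
  split.
  - by rewrite /simple_path g1 g3 g2 hl1 eqxx.
  - by rewrite /simple_path k1 k3 k2 hl2 eqxx.
  - have e1 : pw w (links s r1') <= pw w (links s r1).
      by apply: pw_sub g4 _ => f hf; exact: (walk_nn hw0 hp1 hf).
    have e2 : pw w (links s r2') <= pw w (links s r2).
      by apply: pw_sub k4 _ => f hf; exact: (walk_nn hw0 hp2 hf).
    have hB' : pw w (links s q1) + pw w (links s q2) <= B := hB.
    change (pw w (links s r1') + pw w (links s r2') <= B); lra.
have := hopt _ _ hfeas.
have hD : critical s r1' r2' \subset critical s q1 q2 :\ (u, v).
  exact: subset_trans (setISS g4 k4) hc.
have hpe : forall f, f \in critical s q1 q2 -> 0 < 1 - p f < 1.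
  move=> [a b]; rewrite /critical in_setI => /andP [hf _].
  have /and3P [hpq1 _ _] := f1.
  have [h1 h2] := hp a b (links_adj hpq1 hf).
  apply/andP; split; lra.
rewrite /surv (big_setD1 _ he) (big_setID (critical s r1' r2')) /=.
have -> : (critical s q1 q2 :\ (u, v)) :&: critical s r1' r2' = critical s r1' r2'.
  by apply/setIidPr.
set X := \prod_(i in critical s r1' r2') (1 - p i).
set Y := \prod_(i in _ :\: _) _.
have hX : 0 < X.
  apply: prodr_gt0 => f hf.
  by have /andP [] := hpe f (subsetP (subset_trans hD (subD1set _ _)) f hf).
have hY : Y <= 1.
  apply: prodr_ile1 => f; rewrite in_setD in_setD1 => /andP [_ /andP [_ hf]].
  have /andP [h1 h2] := hpe f hf; apply/andP; split; lra.
have hY0 : 0 <= Y.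
  apply: prodr_ge0 => f; rewrite in_setD in_setD1 => /andP [_ /andP [_ hf]].
  have /andP [h1 h2] := hpe f hf; lra.
have /andP [h1 h2] := hpe _ he.
move=> hle.
have h3 : 0 <= (1 - p (u, v)) * (X - X * Y).
  by apply: mulr_ge0; [lra | rewrite subr_ge0 ler_piMr //; lra].
have h4 : 0 < X * (1 - (1 - p (u, v))) by apply: mulr_gt0; lra.
have : (1 - p (u, v)) * (X * Y) < X by lra.
lra.
Qed.
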